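(* There is a metric on $\mathcal{I}_\alpha$ that generates the same topology as $d_\alpha$, and with respect to which $\mathcal{I}_\alpha$ is isometric to a subset of a compact metric space.
   Context: Fix $\alpha\in(0,1)$. An interval partition is a set $\beta$ of disjoint open subintervals (blocks) of some interval $[0,L]$ that cover $[0,L]$ up to a Lebesgue-null set; write $\|\beta\|:=L$ and $\mathrm{Leb}(U)$ for the length of a block $U$. $\beta$ has the $\alpha$-diversity property if for every $t\in[0,\|\beta\|]$ the limit $\mathscr{D}_\beta(t):=\Gamma(1-\alpha)\lim_{h\downarrow0}h^\alpha\#\{(a,b)\in\beta\colon b-a>h,\ b\le t\}$ exists; $\mathcal{I}_\alpha$ is the set of such partitions. For $U\in\beta$, $\mathscr{D}_\beta(U):=\mathscr{D}_\beta(t)$ for $t\in U$; $\mathscr{D}_\beta(\infty):=\mathscr{D}_\beta(\|\beta\|)$. A correspondence between $\beta,\gamma\in\mathcal{I}_\alpha$ is a finite sequence $(U_j,V_j)_{j\in[n]}$, $n\ge0$, of pairs in $\beta\times\gamma$ with $(U_j)_j$ and $(V_j)_j$ each strictly increasing in left-to-right order. Its $\alpha$-distortion is the maximum of $\sum_{j}|\mathrm{Leb}(U_j)-\mathrm{Leb}(V_j)|+\|\beta\|-\sum_j\mathrm{Leb}(U_j)$, $\sum_{j}|\mathrm{Leb}(U_j)-\mathrm{Leb}(V_j)|+\|\gamma\|-\sum_j\mathrm{Leb}(V_j)$, $\sup_j|\mathscr{D}_\beta(U_j)-\mathscr{D}_\gamma(V_j)|$ and $|\mathscr{D}_\beta(\infty)-\mathscr{D}_\gamma(\infty)|$.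 $d_\alpha(\beta,\gamma)$ is the infimum of the $\alpha$-distortion over all correspondences. *)

(* Defs.v *)
From HB Require Import structures.
From mathcomp Require Import all_boot all_order all_algebra.
From mathcomp Require Import all_classical all_reals all_analysis.
Set Implicit Arguments. Unset Strict Implicit. Unset Printing Implicit Defensive.
Import Order.TTheory GRing.Theory Num.Theory.
Import numFieldNormedType.Exports.
Local Open Scope classical_set_scope.
Local Open Scope ring_scope.

Definition Gammaf {R : realType} (s : R) : R :=
  fine (\int[@lebesgue_measure R]_(x in `]0%R, +oo[) ((x `^ (s - 1)) * expR (- x))%:E)%E.

Definition block_set {R : realType} (U : R * R) : set R := `]U.1, U.2[.

Definition is_interval_partition {R : realType} (B : set (R * R)) (L : R) : Prop :=
  0 <= L /\
  (forall U, B U -> 0 <= U.1 /\ U.1 < U.2 /\ U.2 <= L) /\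
  (forall U V, B U -> B V -> U <> V -> block_set U `&` block_set V = set0) /\
  (@lebesgue_measure R).-negligible (`[0%R, L] `\` \bigcup_(U in B) block_set U).

Definition nblocks {R : realType} (B : set (R * R)) (t h : R) : R :=
  (\sum_(U \in [set U | B U /\ h < U.2 - U.1 /\ U.2 <= t]) (1 : R))%R.

Definition diversity_fun {R : realType} (alpha : R) (B : set (R * R)) (t : R) : R -> R :=
  fun h => Gammaf (1 - alpha) * (h `^ alpha) * nblocks B t h.

Definition has_diversity {R : realType} (alpha : R) (B : set (R * R)) (L : R) : Prop :=
  forall t, 0 <= t <= L -> cvg (diversity_fun alpha B t @ 0^'+).

Definition is_Ialpha {R : realType} (alpha : R) (p : set (R * R) * R) : Prop :=
  is_interval_partition p.1 p.2 /\ has_diversity alpha p.1 p.2.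

(* the space I_alpha; an element is a pair (set of blocks, total length ||beta||) *)
Definition Ialpha {R : realType} (alpha : R) := {p : set (R * R) * R | is_Ialpha alpha p}.

Definition blocks {R : realType} {alpha : R} (b : Ialpha alpha) : set (R * R) := (proj1_sig b).1.
Definition IPlen {R : realType} {alpha : R} (b : Ialpha alpha) : R := (proj1_sig b).2.

Definition Div {R : realType} {alpha : R} (b : Ialpha alpha) (t : R) : R :=
  lim (diversity_fun alpha (blocks b) t @ 0^'+).

(* D_beta(U) := D_beta(t) for t in U; we take t = midpoint of U *)
Definition DivU {R : realType} {alpha : R} (b : Ialpha alpha) (U : R * R) : R :=
  Div b ((U.1 + U.2) / 2).

Definition Divinf {R : realType} {alpha : R} (b : Ialpha alpha) : R := Div b (IPlen b).

Definition Leb {R : realType} (U : R * R) : R := U.2 - U.1.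

Definition block_lt {R : realType} (U V : R * R) : bool := U.2 <= V.1.

Definition is_correspondence {R : realType} {alpha : R} (b g : Ialpha alpha)
    (s : seq ((R * R) * (R * R))) : Prop :=
  (forall p, p \in s -> blocks b p.1 /\ blocks g p.2) /\
  sorted block_lt (map fst s) /\ sorted block_lt (map snd s).

Definition distortion {R : realType} {alpha : R} (b g : Ialpha alpha)
    (s : seq ((R * R) * (R * R))) : R :=
  let S := \sum_(p <- s) `|Leb p.1 - Leb p.2| in
  Num.max (Num.max (S + IPlen b - \sum_(p <- s) Leb p.1)
                   (S + IPlen g - \sum_(p <- s) Leb p.2))
          (Num.max (\big[Num.max/0]_(p <- s) `|DivU b p.1 - DivU g p.2|)
                   `|Divinf b - Divinf g|).

Definition d_alpha {R : realType} {alpha : R} (b g : Ialpha alpha) : R :=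
  inf [set x | exists s, is_correspondence b g s /\ x = distortion b g s].

Definition is_metric {R : realType} {T : Type} (d : T -> T -> R) : Prop :=
  (forall x y, 0 <= d x y) /\ (forall x y, d x y = 0 <-> x = y) /\
  (forall x y, d x y = d y x) /\ (forall x y z, d x z <= d x y + d y z).

Definition d_open {R : realType} {T : Type} (d : T -> T -> R) (U : set T) : Prop :=
  forall x, U x -> exists e : R, 0 < e /\ forall y, d x y < e -> U y.

Definition d_compact {R : realType} {T : Type} (d : T -> T -> R) : Prop :=
  forall (I : Type) (F : I -> set T), (forall i, d_open d (F i)) ->
    (forall x, exists i, F i x) ->
    exists (n : nat) (g : 'I_n -> I), forall x, exists k, F (g k) x.

(* Main.v *)
Require Import Defs.
From HB Require Import structures.
From mathcomp Require Import all_boot all_order all_algebra.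
From mathcomp Require Import all_classical all_reals all_analysis.
From mathcomp Require Import lra zify.
Import Order.TTheory GRing.Theory Num.Theory.
Set Implicit Arguments. Unset Strict Implicit. Unset Printing Implicit Defensive.
Local Open Scope classical_set_scope.
Local Open Scope ring_scope.

Section Blocks.
Variable R : realType.
Variable alpha : R.
Local Notation T := (Ialpha alpha).

Lemma blk (b : T) U : blocks b U -> 0 <= U.1 /\ U.1 < U.2 /\ U.2 <= IPlen b.
Proof. rewrite /blocks /IPlen; case: b => -[B L] [[hL [hB _]] _] /=; exact: hB. Qed.

Lemma blk_disj (b : T) U V : blocks b U -> blocks b V -> U <> V ->
  U.2 <= V.1 \/ V.2 <= U.1.
Proof.
move=> bU bV UV.
have [_ [U12 _]] := blk bU; have [_ [V12 _]] := blk bV.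
have hD : block_set U `&` block_set V = set0.
  move: bU bV UV; rewrite /blocks; case: b => -[B L] [[hL [hB [hD _]]] _] /= bU bV UV; exact: hD.
case: (leP U.2 V.1) => h1; first by left.
case: (leP V.2 U.1) => h2; first by right.
exfalso.
have key : forall x, U.1 < x < U.2 -> V.1 < x < V.2 -> False.
  move=> x hx hy.
  have : (block_set U `&` block_set V) x.
    by split; rewrite /block_set /= in_itv /=.
  by rewrite hD.
case: (leP U.1 V.1) => a1; case: (leP U.2 V.2) => a2.
- apply: (key ((V.1 + U.2)/2)); apply/andP; split; lra.
- apply: (key ((V.1 + V.2)/2)); apply/andP; split; lra.
- apply: (key ((U.1 + U.2)/2)); apply/andP; split; lra.
- apply: (key ((U.1 + V.2)/2)); apply/andP; split; lra.
Qed.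

Definition bltP (U : R * R) : bool := U.1 < U.2.

Lemma block_lt_trans : {in bltP & &, transitive (@block_lt R)}.
Proof.
move=> V U W hV _ _; rewrite /block_lt => h1 h2; move: hV; rewrite /in_mem /= /bltP => hV.
move: h1 h2 hV; rewrite /=; lra.
Qed.

Lemma block_lt_irr U : bltP U -> ~~ block_lt U U.
Proof. by rewrite /bltP /block_lt -ltNge. Qed.

Lemma block_lt_asym U V : bltP U -> bltP V -> block_lt U V -> ~~ block_lt V U.
Proof.
rewrite /bltP /block_lt => hU hV h1; rewrite -ltNge.
exact: (lt_le_trans hU (le_trans h1 (ltW hV))).
Qed.

Lemma chain_sum (l : seq (R * R)) (m M : R) :
  (forall U, U \in l -> m <= U.1 /\ U.1 < U.2 /\ U.2 <= M) ->
  pairwise (@block_lt R) l -> m <= M -> \sum_(U <- l) Leb U <= M - m.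
Proof.
elim: l m => [|U l IH] m hl hp hmM; first by rewrite big_nil subr_ge0.
rewrite big_cons; move: hp; rewrite pairwise_cons => /andP [hall hp].
have [h1 [h2 h3]] := hl U (mem_head _ _).
have := IH U.2 _ hp h3; rewrite /Leb.
  move=> H; suff: \sum_(j <- l) (j.2 - j.1) <= M - U.2 by lra.
  apply: H.
move=> V hV; have [_ [h4 h5]] := hl V (@mem_behead _ (U :: l) _ hV).
by split => //; move/allP: hall => /(_ V hV).
Qed.

Definition le1 (U V : R * R) : bool := U.1 <= V.1.

Lemma sort_blocks (b : T) (l : seq (R * R)) :
  uniq l -> (forall U, U \in l -> blocks b U) ->
  pairwise (@block_lt R) (sort le1 l).
Proof.
move=> ul hl.
have tot : total le1 by move=> U V; rewrite /le1 le_total.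
have trans : transitive le1 by move=> V U W; rewrite /le1; apply: le_trans.
have s1 : pairwise le1 (sort le1 l) by rewrite -sorted_pairwise //; apply: sort_sorted.
have s2 : pairwise (fun x y => x != y) (sort le1 l).
  by rewrite -uniq_pairwise sort_uniq.
have s3 : pairwise (fun x y => le1 x y && (x != y)) (sort le1 l).
  by rewrite (pairwise_relI le1 (fun x y => x != y)) s1 s2.
apply: (sub_in_pairwise (P := mem l)) s3; last first.
  by apply/allP => U; rewrite mem_sort.
move=> U V /hl hU /hl hV /andP [h1 h2].
have [_ [U12 _]] := blk hU; have [_ [V12 _]] := blk hV.
case: (blk_disj hU hV (elimN eqP h2)) => // h.
move: h1; rewrite /le1 /block_lt => h1; lra.
Qed.

Lemma sum_le_len (b : T) (l : seq (R * R)) :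
  uniq l -> (forall U, U \in l -> blocks b U) ->
  \sum_(U <- l) Leb U <= IPlen b.
Proof.
move=> ul hl.
have pe : perm_eq (sort le1 l) l by rewrite perm_sort.
rewrite -(perm_big _ pe).
have hL : 0 <= IPlen b by rewrite /IPlen; case: (svalP b) => -[].
have hb : forall U, U \in sort le1 l -> 0 <= U.1 /\ U.1 < U.2 /\ U.2 <= IPlen b.
  by move=> U; rewrite mem_sort => /hl /blk.
by have := @chain_sum (sort le1 l) 0 (IPlen b) hb (sort_blocks ul hl) hL; rewrite subr0.
Qed.

End Blocks.

Section Corr.
Variable R : realType.
Variable alpha : R.
Local Notation T := (Ialpha alpha).
Implicit Types (b g : T) (s : seq ((R * R) * (R * R))).

Definition SS s := \sum_(p <- s) `|Leb p.1 - Leb p.2|.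
Definition SA s := \sum_(p <- s) Leb p.1.
Definition SB s := \sum_(p <- s) Leb p.2.
Definition MX b g s := \big[Num.max/0]_(p <- s) `|DivU b p.1 - DivU g p.2|.

Lemma dist_le b g s e : distortion b g s <= e <->
  [/\ SS s + IPlen b - SA s <= e, SS s + IPlen g - SB s <= e,
      MX b g s <= e & `|Divinf b - Divinf g| <= e].
Proof.
rewrite /distortion !ge_max; split.
  by move=> /andP [/andP [-> ->] /andP [-> ->]].
by case=> -> -> -> ->.
Qed.

Lemma dist_ge b g s : [/\ SS s + IPlen b - SA s <= distortion b g s,
   SS s + IPlen g - SB s <= distortion b g s,
   MX b g s <= distortion b g s & `|Divinf b - Divinf g| <= distortion b g s].
Proof. by apply/dist_le. Qed.

Lemma dis_ge0 b g s : 0 <= distortion b g s.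
Proof. by case: (dist_ge b g s) => _ _ _; apply: le_trans. Qed.

Lemma SS_ge0 s : 0 <= SS s.
Proof. by apply: sumr_ge0 => p _. Qed.

Lemma corr_nil b g : is_correspondence b g [::].
Proof. by split. Qed.

Lemma d_le b g s : is_correspondence b g s -> d_alpha b g <= distortion b g s.
Proof.
move=> hs; apply: ge_inf; last by exists s.
by exists 0 => x [s' [_ ->]]; apply: dis_ge0.
Qed.

Lemma d_lt b g e : d_alpha b g < e ->
  exists s, is_correspondence b g s /\ distortion b g s < e.
Proof.
move=> h; have [x [s [hs ->]] hx] := inf_lt (ex_intro _ (distortion b g [::])
  (ex_intro _ [::] (conj (corr_nil b g) erefl))) h.
by exists s.
Qed.

Lemma d_ge0 b g : 0 <= d_alpha b g.
Proof.
apply: lb_le_inf.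
  by exists (distortion b g [::]); exists [::]; split => //; apply: corr_nil.
by move=> x [s [_ ->]]; apply: dis_ge0.
Qed.

Lemma pairwise_uniq (l : seq (R * R)) :
  pairwise (@block_lt R) l -> all (@bltP R) l -> uniq l.
Proof.
move=> hp ha; rewrite uniq_pairwise.
apply: (sub_in_pairwise (P := @bltP R)) ha hp.
move=> U V hU _ h; apply/eqP => E; subst V.
by move: h; rewrite (negbTE (block_lt_irr hU)).
Qed.

Lemma corr_pw b g s : is_correspondence b g s ->
  [/\ pairwise (@block_lt R) (map fst s), pairwise (@block_lt R) (map snd s),
      all (@bltP R) (map fst s) & all (@bltP R) (map snd s)].
Proof.
case=> hm [h1 h2].
have a1 : all (@bltP R) (map fst s).
  apply/allP => U /mapP [p hp ->]; have [/blk [_ [h _]] _] := hm p hp; exact: h.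
have a2 : all (@bltP R) (map snd s).
  apply/allP => U /mapP [p hp ->]; have [_ /blk [_ [h _]]] := hm p hp; exact: h.
split => //.
  by rewrite -(sorted_pairwise_in (@block_lt_trans R)).
by rewrite -(sorted_pairwise_in (@block_lt_trans R)).
Qed.

Lemma SA_map s : SA s = \sum_(U <- map fst s) Leb U.
Proof. by rewrite /SA big_map. Qed.
Lemma SB_map s : SB s = \sum_(U <- map snd s) Leb U.
Proof. by rewrite /SB big_map. Qed.

Lemma corr_SA b g s : is_correspondence b g s -> SA s <= IPlen b.
Proof.
move=> hs; have [p1 _ a1 _] := corr_pw hs; rewrite SA_map.
apply: sum_le_len; first exact: pairwise_uniq.
by move=> U /mapP [p hp ->]; case: hs => /(_ p hp) [].
Qed.

Lemma corr_SB b g s : is_correspondence b g s -> SB s <= IPlen g.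
Proof.
move=> hs; have [_ p2 _ a2] := corr_pw hs; rewrite SB_map.
apply: sum_le_len; first exact: pairwise_uniq.
by move=> U /mapP [p hp ->]; case: hs => /(_ p hp) [].
Qed.

Definition swp s := map (fun p => (p.2, p.1)) s.

Lemma swp_fst s : map fst (swp s) = map snd s.
Proof. by elim: s => //= p s ->. Qed.
Lemma swp_snd s : map snd (swp s) = map fst s.
Proof. by elim: s => //= p s ->. Qed.

Lemma corr_swap b g s : is_correspondence b g s -> is_correspondence g b (swp s).
Proof.
case=> hm [h1 h2]; split; last by rewrite swp_fst swp_snd.
by move=> p /mapP [q hq ->] /=; have [] := hm q hq.
Qed.

Lemma dist_swap b g s : distortion g b (swp s) = distortion b g s.
Proof.
have e1 : SS (swp s) = SS s by rewrite /SS big_map; apply: eq_bigr => p _; rewrite distrC.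
have e2 : SA (swp s) = SB s by rewrite /SA /SB big_map.
have e3 : SB (swp s) = SA s by rewrite /SA /SB big_map.
have e4 : MX g b (swp s) = MX b g s.
  by rewrite /MX big_map; apply: eq_bigr => p _; rewrite distrC.
rewrite /distortion.
rewrite -/(SS (swp s)) -/(SA (swp s)) -/(SB (swp s)) -/(MX g b (swp s)).
rewrite -/(SS s) -/(SA s) -/(SB s) -/(MX b g s).
by rewrite e1 e2 e3 e4 (distrC (Divinf g)) (maxC (SS s + IPlen g - SB s)).
Qed.

Lemma d_sym b g : d_alpha b g = d_alpha g b.
Proof.
rewrite /d_alpha; congr inf; apply/seteqP; split => x [s [hs ->]].
  by exists (swp s); split; [apply: corr_swap | rewrite dist_swap].
by exists (swp s); split; [apply: corr_swap | rewrite dist_swap].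
Qed.

End Corr.

Section Definite.
Variable R : realType.
Variable alpha : R.
Local Notation T := (Ialpha alpha).
Implicit Types (b g : T) (s : seq ((R * R) * (R * R))).

Lemma match_pos b g s U : is_correspondence b g s -> blocks b U ->
  distortion b g s < Leb U ->
  exists V, blocks g V /\ `|U.1 - V.1| <= distortion b g s /\
                          `|Leb U - Leb V| <= distortion b g s.
Proof.
move=> hs bU hD.
set D := distortion b g s in hD *.
have [d1 d2 _ _] := dist_ge b g s; rewrite -/D in d1 d2.
have [pf ps af as_] := corr_pw hs.
have hSA := corr_SA hs; have hSB := corr_SB hs.
have hSS := SS_ge0 s.
have [U0 [U1 U2]] := blk bU.
have Uin : U \in map fst s.
  apply/negPn/negP => hn.
  have hu : uniq (U :: map fst s) by rewrite /= hn; exact: pairwise_uniq.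
  have := @sum_le_len R alpha b (U :: map fst s) hu.
  rewrite big_cons -SA_map => H.
  have : Leb U + SA s <= IPlen b.
    apply: H => V; rewrite inE => /orP [/eqP -> //|/mapP [p hp ->]].
    by case: hs => /(_ p hp) [].
  move: hD; rewrite /Leb; lra.
case/mapP: Uin => p hp Ep.
have [_ bV] : blocks b p.1 /\ blocks g p.2 by case: hs => /(_ p hp).
exists p.2; split => //.
have [V0 [V1 V2]] := blk bV.
case/splitPr: hp hs pf ps af as_ d1 d2 hSA hSB hSS => s1 s2 hs pf ps af as_ d1 d2 hSA hSB hSS.
rewrite !map_cat /= !pairwise_cat !pairwise_cons in pf ps.
case/and3P: pf => ar1 pf1 /andP [allU pf2].
case/and3P: ps => ar2 ps1 /andP [allV ps2].
rewrite -Ep in ar1 allU.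
move: af as_; rewrite !map_cat !all_cat /= => /and3P [af1 _ af2] /and3P [as1 _ as2].
have hA1 : SA s1 <= U.1.
  rewrite SA_map -[U.1]subr0; apply: chain_sum pf1 U0.
  move=> W hW; have [bW _] : blocks b W /\ True.
    by case/mapP: hW => q hq ->; case: hs => /(_ q); rewrite mem_cat hq => /(_ isT) [].
  have [W0 [W1 W2]] := blk bW; split => //; split => //.
  move/allrelP: ar1 => /(_ W U hW); rewrite mem_head => /(_ isT).
  by rewrite /block_lt.
have hB1 : SB s1 <= p.2.1.
  rewrite SB_map -[p.2.1]subr0; apply: chain_sum ps1 V0.
  move=> W hW; have [bW _] : blocks g W /\ True.
    by case/mapP: hW => q hq ->; case: hs => /(_ q); rewrite mem_cat hq => /(_ isT) [].
  have [W0 [W1 W2]] := blk bW; split => //; split => //.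
  move/allrelP: ar2 => /(_ W p.2 hW); rewrite mem_head => /(_ isT).
  by rewrite /block_lt.
have hA2 : SA (p :: s2) <= IPlen b - U.1.
  rewrite SA_map /= -Ep; apply: (@chain_sum R (U :: map fst s2) U.1 (IPlen b)).
  - move=> W; rewrite inE => /orP [/eqP ->|hW]; first by split => //; lra.
    have [bW _] : blocks b W /\ True.
      by case/mapP: hW => q hq ->; case: hs => /(_ q); rewrite mem_cat inE hq !orbT => /(_ isT) [].
    have [W0 [W1 W2]] := blk bW; split => //.
    move/allP: allU => /(_ W hW); rewrite /block_lt; lra.
  - by rewrite pairwise_cons allU.
  - lra.
have hB2 : SB (p :: s2) <= IPlen g - p.2.1.
  rewrite SB_map /=; apply: (@chain_sum R (p.2 :: map snd s2) p.2.1 (IPlen g)).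
  - move=> W; rewrite inE => /orP [/eqP ->|hW]; first by split => //; lra.
    have [_ bW] : True /\ blocks g W.
      by case/mapP: hW => q hq ->; case: hs => /(_ q); rewrite mem_cat inE hq !orbT => /(_ isT) [].
    have [W0 [W1 W2]] := blk bW; split => //.
    move/allP: allV => /(_ W hW); rewrite /block_lt; lra.
  - by rewrite pairwise_cons allV.
  - lra.
have eA : SA (s1 ++ p :: s2) = SA s1 + SA (p :: s2) by rewrite /SA big_cat.
have eB : SB (s1 ++ p :: s2) = SB s1 + SB (p :: s2) by rewrite /SB big_cat.
have eS : SS (s1 ++ p :: s2) = SS s1 + `|Leb p.1 - Leb p.2| + SS s2.
  by rewrite /SS big_cat big_cons /= addrA.
have n1 : `|SA s1 - SB s1| <= SS s1.
  by rewrite /SA /SB -sumrB; apply: ler_norm_sum.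
have g1 := SS_ge0 s1; have g2 := SS_ge0 s2.
move: n1; rewrite ler_norml => /andP [n1 n2].
have n3 := ler_norm (Leb p.1 - Leb p.2).
have n4 : - `|Leb p.1 - Leb p.2| <= Leb p.1 - Leb p.2.
  by rewrite lerNl -normrN ler_norm.
rewrite Ep in eA hA1 hA2 n3 n4 *.
split; rewrite ler_norml; apply/andP; split; lra.
Qed.

End Definite.

Section Definite2.
Variable R : realType.
Variable alpha : R.
Local Notation T := (Ialpha alpha).
Implicit Types (b g : T) (s : seq ((R * R) * (R * R))).

Definition closeP b g := forall e : R, 0 < e ->
  exists s, is_correspondence b g s /\ distortion b g s < e.

Lemma closeP_sym b g : closeP b g -> closeP g b.
Proof.
move=> h e he; have [s [hs hd]] := h e he.
by exists (swp s); split; [apply: corr_swap | rewrite dist_swap].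
Qed.

Lemma close_match b g U e : closeP b g -> blocks b U -> 0 < e -> e <= Leb U ->
  exists V, blocks g V /\ `|U.1 - V.1| < e /\ `|Leb U - Leb V| < e.
Proof.
move=> h bU he heU; have [s [hs hd]] := h e he.
have [V [bV [h1 h2]]] := match_pos hs bU (lt_le_trans hd heU).
exists V; split => //; split; exact: le_lt_trans hd.
Qed.

Lemma pair_eq (U V : R * R) : U.1 = V.1 -> U.2 = V.2 -> U = V.
Proof. by case: U V => [u1 u2] [v1 v2] /= -> ->. Qed.

Lemma def_blocks b g : closeP b g -> forall U, blocks b U -> blocks g U.
Proof.
move=> h U bU.
have [U0 [U1 U2]] := blk bU.
have lp : 0 < Leb U by rewrite /Leb; lra.
have e1p : 0 < Leb U / 8 by lra.
have e1l : Leb U / 8 <= Leb U by lra.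
have [V [bV [h1 h2]]] := close_match h bU e1p e1l.
have [E|hne] := eqVneq V U; first by rewrite -E.
exfalso.
have k1 := normr_ge0 (U.1 - V.1); have k2 := normr_ge0 (U.2 - V.2).
set del := `|U.1 - V.1| + `|U.2 - V.2|.
have dp : 0 < del.
  rewrite lt_def; apply/andP; split; last by rewrite /del addr_ge0.
  apply/eqP => d0; move/eqP: hne; apply.
  have z1 : `|U.1 - V.1| = 0 by move: d0; rewrite /del; lra.
  have z2 : `|U.2 - V.2| = 0 by move: d0; rewrite /del; lra.
  move: z1 z2 => /normr0_eq0 /eqP; rewrite subr_eq0 => /eqP z1 /normr0_eq0 /eqP.
  by rewrite subr_eq0 => /eqP z2; apply: pair_eq.
set e2 := Num.min (Leb U / 8) (del / 4).
have e2p : 0 < e2 by rewrite lt_min; apply/andP; split; lra.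
have e2a : e2 <= Leb U / 8 by rewrite ge_min lexx.
have e2b : e2 <= del / 4 by rewrite ge_min lexx orbT.
have e2l : e2 <= Leb U by lra.
have [V' [bV' [h3 h4]]] := close_match h bU e2p e2l.
have [V0 [V1 V2]] := blk bV; have [W0 [W1 W2]] := blk bV'.
have [E|hne'] := eqVneq V' V.
  subst V'.
  have m1 : `|U.2 - V.2| < 2 * e2.
    move: h3 h4; rewrite /Leb !ltr_norml => /andP [? ?] /andP [? ?].
    apply/andP; split; lra.
  have : del < 3 * e2 by rewrite /del; lra.
  lra.
have hne'' : V <> V' by move=> E; rewrite E eqxx in hne'.
move: h1 h2 h3 h4; rewrite /Leb !ltr_norml => /andP [? ?] /andP [? ?] /andP [? ?] /andP [? ?].
move: e2a; rewrite /Leb => e2a'.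
case: (blk_disj bV bV' hne'') => hh; lra.
Qed.

Lemma d_def b g : closeP b g -> b = g.
Proof.
move=> h.
have hB : blocks b = blocks g.
  apply/funext => U; apply/propext; split; first exact: def_blocks.
  exact: def_blocks (closeP_sym h) U.
have hL : IPlen b = IPlen g.
  apply/eqP; rewrite -subr_eq0 -normr_eq0; apply/eqP.
  apply/le_anti/andP; split; last exact: normr_ge0.
  apply/ler_addgt0Pr => e he; rewrite add0r.
  have [s [hs hd]] := h e he.
  have [d1 d2 _ _] := dist_ge b g s.
  have a1 := corr_SA hs; have a2 := corr_SB hs.
  have n1 : `|SA s - SB s| <= SS s by rewrite /SA /SB -sumrB; apply: ler_norm_sum.
  move: n1; rewrite ler_norml => /andP [n1 n2].
  rewrite ler_norml; apply/andP; split; lra.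
move: hB hL; rewrite /blocks /IPlen.
case: b {h} => [[Bb Lb] hb]; case: g => [[Bg Lg] hg] /= eB eL.
by apply: eq_exist; rewrite eB eL.
Qed.

End Definite2.

Section Compose.
Variable R : realType.
Variable alpha : R.
Local Notation T := (Ialpha alpha).
Local Notation B2 := ((R * R) * (R * R))%type.
Implicit Types (b g h : T) (s : seq B2).

Definition lookup (V : R * R) s : option (R * R) :=
  ohead [seq q.2 | q <- s & q.1 == V].

Lemma lookup_mem V W s : lookup V s = Some W -> (V, W) \in s.
Proof.
rewrite /lookup; case E: [seq q.2 | q <- s & q.1 == V] => [|w ws] //= [<-].
have : w \in [seq q.2 | q <- s & q.1 == V] by rewrite E mem_head.
case/mapP => q; rewrite mem_filter => /andP [/eqP <- hq] ->.
by rewrite -surjective_pairing.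
Qed.

Lemma lookup_none V s : lookup V s = None -> V \notin map fst s.
Proof.
rewrite /lookup; case E: [seq q.2 | q <- s & q.1 == V] => [|w ws] //= _.
apply/mapP => -[q hq EV].
have : q.2 \in [seq q.2 | q <- s & q.1 == V] by apply: map_f; rewrite mem_filter -EV eqxx.
by rewrite E.
Qed.

Lemma lookup_some V W s : uniq (map fst s) -> (V, W) \in s -> lookup V s = Some W.
Proof.
elim: s => //= q s IH /andP [hq hu]; rewrite inE => /orP [/eqP <-|hin].
  by rewrite /lookup /= eqxx.
have qV : q.1 != V.
  apply/eqP => E; move: hq; rewrite E => /negP; apply; apply/mapP; by exists (V, W).
by rewrite /lookup /= (negbTE qV); apply: IH.
Qed.

Lemma mono_s2 s V W V' W' :
  pairwise (@block_lt R) (map fst s) -> pairwise (@block_lt R) (map snd s) ->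
  all (@bltP R) (map fst s) -> (V, W) \in s -> (V', W') \in s ->
  block_lt V V' -> block_lt W W'.
Proof.
elim: s => //= q s IH /andP [a1 p1] /andP [a2 p2] /andP [b1 bs].
rewrite !inE => /orP [/eqP E1|h1] /orP [/eqP E2|h2] hVV'.
- have eV : V = q.1 by rewrite -E1.
  have eV' : V' = q.1 by rewrite -E2.
  by move: (block_lt_irr b1); rewrite -{1}eV -{1}eV' hVV'.
- have eW : W = q.2 by rewrite -E1.
  by rewrite eW; apply: (allP a2 W' (map_f snd h2)).
- have eV' : V' = q.1 by rewrite -E2.
  have h3 : block_lt V' V by rewrite eV'; apply: (allP a1 V (map_f fst h1)).
  have bV : bltP V := allP bs V (map_f fst h1).
  have bV' : bltP V' by rewrite eV'.
  by move: (block_lt_asym bV' bV h3); rewrite hVV'.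
- exact: IH.
Qed.

Definition mtd s2 (p : B2) : bool := lookup p.2 s2 != None.
Definition Wf s2 (p : B2) : R * R := odflt p.2 (lookup p.2 s2).
Definition mt s1 s2 := [seq p <- s1 | mtd s2 p].
Definition ut s1 s2 := [seq p <- s1 | predC (mtd s2) p].
Definition comp s1 s2 := [seq (p.1, Wf s2 p) | p <- mt s1 s2].

Lemma mt_lookup s1 s2 p : p \in mt s1 s2 -> (p.2, Wf s2 p) \in s2.
Proof.
rewrite mem_filter /mtd /Wf => /andP [].
by case E: (lookup p.2 s2) => [W|] // _ _ /=; apply: lookup_mem.
Qed.

Lemma sum_filterC (F : B2 -> R) (P : pred B2) s :
  \sum_(p <- s) F p = \sum_(p <- [seq x <- s | P x]) F p +
                      \sum_(p <- [seq x <- s | predC P x]) F p.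
Proof. by rewrite -big_cat; apply: perm_big; rewrite perm_sym perm_filterC. Qed.

Lemma sum_sub_le (F : B2 -> R) (l s : seq B2) : uniq l -> uniq s ->
  {subset l <= s} -> (forall x, 0 <= F x) ->
  \sum_(p <- l) F p <= \sum_(p <- s) F p.
Proof.
move=> ul us sub F0.
rewrite (sum_filterC F (mem l) s).
have pe : perm_eq [seq x <- s | mem l x] l.
  apply: uniq_perm => //; first exact: filter_uniq.
  by move=> x; rewrite mem_filter; apply/andP/idP => [[]//|hx]; split => //; apply: sub.
rewrite (perm_big _ pe) lerDl; apply: sumr_ge0 => x _; exact: F0.
Qed.

Lemma SS_swp s : SS (swp s) = SS s.
Proof. by rewrite /SS big_map; apply: eq_bigr => p _; rewrite distrC. Qed.
Lemma SA_swp s : SA (swp s) = SB s.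
Proof. by rewrite /SA /SB big_map. Qed.
Lemma SB_swp s : SB (swp s) = SA s.
Proof. by rewrite /SA /SB big_map. Qed.

Lemma mem_swp s x : (x \in swp s) = ((x.2, x.1) \in s).
Proof.
apply/mapP/idP => [[q hq ->] /=|hx]; first by rewrite -surjective_pairing.
by exists (x.2, x.1) => //=; rewrite -surjective_pairing.
Qed.

Lemma comp_fst s1 s2 : map fst (comp s1 s2) = map fst (mt s1 s2).
Proof. by rewrite /comp -map_comp. Qed.

Lemma comp_snd s1 s2 : map snd (comp s1 s2) = map (Wf s2) (mt s1 s2).
Proof. by rewrite /comp -map_comp. Qed.

Lemma comp_corr b g h s1 s2 : is_correspondence b g s1 -> is_correspondence g h s2 ->
  is_correspondence b h (comp s1 s2).
Proof.
move=> c1 c2.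
have [pf1 ps1 af1 as1] := corr_pw c1; have [pf2 ps2 af2 as2] := corr_pw c2.
case: (c1) => m1 _; case: (c2) => m2 _.
split; [|split].
- move=> x /mapP [p hp ->] /=; split.
    by move: hp; rewrite mem_filter => /andP [_ /m1 []].
  by have [] := m2 _ (mt_lookup hp).
- apply: pairwise_sorted; rewrite comp_fst.
  apply: subseq_pairwise pf1; apply: map_subseq; exact: filter_subseq.
- apply: pairwise_sorted; rewrite comp_snd pairwise_map.
  have pm : pairwise (relpre snd (@block_lt R)) (mt s1 s2).
    rewrite -pairwise_map; apply: subseq_pairwise ps1; apply: map_subseq; exact: filter_subseq.
  apply: (sub_in_pairwise (P := mem (mt s1 s2))) pm; last by apply/allP.
  move=> p p' hp hp' /= hl.
  exact: (mono_s2 pf2 ps2 af2 (mt_lookup hp) (mt_lookup hp') hl).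
Qed.

Lemma comp_bound_b b g h s1 s2 : is_correspondence b g s1 -> is_correspondence g h s2 ->
  SS (comp s1 s2) + IPlen b - SA (comp s1 s2) <=
  (SS s1 + IPlen b - SA s1) + (SS s2 + IPlen g - SA s2).
Proof.
move=> c1 c2.
have [pf1 ps1 af1 as1] := corr_pw c1; have [pf2 ps2 af2 as2] := corr_pw c2.
case: (c1) => m1 _; case: (c2) => m2 _.
set m := mt s1 s2; set u := ut s1 s2.
have eSS1 : SS s1 = SS m + SS u by rewrite /SS (sum_filterC _ (mtd s2)).
have eSA1 : SA s1 = SA m + SA u by rewrite /SA (sum_filterC _ (mtd s2)).
have eSAc : SA (comp s1 s2) = SA m by rewrite /SA /comp big_map.
have eSSc : SS (comp s1 s2) = \sum_(p <- m) `|Leb p.1 - Leb (Wf s2 p)|.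
  by rewrite /SS /comp big_map.
have k1 : \sum_(p <- m) `|Leb p.1 - Leb (Wf s2 p)| <=
          SS m + \sum_(p <- m) `|Leb p.2 - Leb (Wf s2 p)|.
  rewrite /SS -big_split /=; apply: ler_sum => p _; exact: ler_distD.
have us1 : uniq (map snd s1) by apply: pairwise_uniq.
have uf2 : uniq (map fst s2) by apply: pairwise_uniq.
have k2 : \sum_(p <- m) `|Leb p.2 - Leb (Wf s2 p)| <= SS s2.
  have -> : \sum_(p <- m) `|Leb p.2 - Leb (Wf s2 p)| =
            \sum_(q <- [seq (p.2, Wf s2 p) | p <- m]) `|Leb q.1 - Leb q.2|.
    by rewrite big_map.
  apply: sum_sub_le.
  - apply: (@map_uniq _ _ fst); rewrite -map_comp.
    have -> : [seq (fst \o (fun p => (p.2, Wf s2 p))) i | i <- m] = map snd m by apply: eq_map.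
    apply: subseq_uniq us1; apply: map_subseq; exact: filter_subseq.
  - exact: map_uniq uf2.
  - by move=> q /mapP [p hp ->]; exact: (mt_lookup hp).
  - by move=> q; apply: normr_ge0.
have k3 : SA u <= SS u + SB u.
  rewrite /SA /SS /SB -big_split /=; apply: ler_sum => p _.
  have := ler_norm (Leb p.1 - Leb p.2); lra.
have k4 : SA s2 + SB u <= IPlen g.
  rewrite SA_map SB_map -big_cat; apply: sum_le_len.
  - rewrite cat_uniq uf2 /=; apply/andP; split.
      apply/hasPn => V /mapP [p hp ->]; apply: lookup_none.
      by move: hp; rewrite mem_filter /= /mtd negbK => /andP [/eqP].
    apply: subseq_uniq us1; apply: map_subseq; exact: filter_subseq.
  - move=> V; rewrite mem_cat => /orP [] /mapP [p hp ->].
      by have [] := m2 _ hp.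
    by move: hp; rewrite mem_filter => /andP [_ /m1 []].
have g1 := SS_ge0 s2.
rewrite eSSc eSAc; lra.
Qed.

Lemma comp_memP s1 s2 x : uniq (map fst s2) ->
  reflect (exists V, (x.1, V) \in s1 /\ (V, x.2) \in s2) (x \in comp s1 s2).
Proof.
move=> u2; apply: (iffP idP).
  case/mapP => p hp -> /=; exists p.2; split; last exact: (mt_lookup hp).
  by rewrite -surjective_pairing; move: hp; rewrite mem_filter => /andP [].
case=> V [h1 h2]; apply/mapP; exists (x.1, V).
  by rewrite mem_filter h1 /mtd /= (lookup_some u2 h2).
by rewrite /Wf /= (lookup_some u2 h2) /= -surjective_pairing.
Qed.

Lemma mx_le (F : B2 -> R) s x : x \in s -> F x <= \big[Num.max/0]_(y <- s) F y.
Proof.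
elim: s => //= y s IH; rewrite inE big_cons => /orP [/eqP ->|hx].
  by rewrite le_max lexx.
by rewrite le_max (IH hx) orbT.
Qed.

Lemma mx_ge0 (F : B2 -> R) s : 0 <= \big[Num.max/0]_(y <- s) F y.
Proof. by elim: s => [|y s IH]; rewrite ?big_nil ?big_cons ?le_max ?IH ?orbT. Qed.

Lemma comp_dist b g h s1 s2 : is_correspondence b g s1 -> is_correspondence g h s2 ->
  distortion b h (comp s1 s2) <= distortion b g s1 + distortion g h s2.
Proof.
move=> c1 c2.
have [pf1 ps1 af1 as1] := corr_pw c1; have [pf2 ps2 af2 as2] := corr_pw c2.
have us1 : uniq (map snd s1) by apply: pairwise_uniq.
have uf2 : uniq (map fst s2) by apply: pairwise_uniq.
have [a1 a2 a3 a4] := dist_ge b g s1.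
have [b1 b2 b3 b4] := dist_ge g h s2.
set c := comp s1 s2.
set c' := comp (swp s2) (swp s1).
have uc : uniq c.
  apply: (@map_uniq _ _ fst); rewrite comp_fst; apply: subseq_uniq (pairwise_uniq pf1 af1).
  apply: map_subseq; exact: filter_subseq.
have uc' : uniq (swp c').
  apply: (@map_uniq _ _ snd); rewrite swp_snd comp_fst.
  apply: (@subseq_uniq _ _ (map fst (swp s2))); first by apply: map_subseq; exact: filter_subseq.
  by rewrite swp_fst; apply: pairwise_uniq.
have pe : perm_eq (swp c') c.
  apply: uniq_perm => // x; rewrite mem_swp.
  apply/(@comp_memP (swp s2) (swp s1) (x.2, x.1)); first by rewrite swp_fst.
  case: (@comp_memP s1 s2 x uf2) => [[V [h1 h2]]|hn].
    by exists V; rewrite !mem_swp /=.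
  move=> [V [h1 h2]]; apply: hn; exists V; move: h1 h2; rewrite !mem_swp /=.
  by move=> -> ->.
have eSS : SS c = SS c' by rewrite -(SS_swp c') /SS (perm_big _ pe).
have eSB : SB c = SA c' by rewrite -(SB_swp c') /SB (perm_big _ pe).
have k1 := comp_bound_b c1 c2.
have k2 := comp_bound_b (corr_swap c2) (corr_swap c1).
rewrite -/c' !SS_swp !SA_swp in k2.
apply/dist_le; split.
- lra.
- rewrite eSS eSB; lra.
- rewrite /MX big_seq; apply: bigmax_le => [|x hx].
    by apply: addr_ge0; apply: dis_ge0.
  have [V [h1 h2]] := elimT (@comp_memP s1 s2 x uf2) hx.
  apply: le_trans (ler_distD (DivU g V) _ _) _.
  have e1 := @mx_le (fun p => `|DivU b p.1 - DivU g p.2|) s1 _ h1.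
  have e2 := @mx_le (fun p => `|DivU g p.1 - DivU h p.2|) s2 _ h2.
  rewrite /MX /= in a3 b3 e1 e2; lra.
- apply: le_trans (ler_distD (Divinf g) _ _) _; lra.
Qed.

Lemma d_triangle b g h : d_alpha b h <= d_alpha b g + d_alpha g h.
Proof.
apply/ler_addgt0Pr => e he.
have [s1 [c1 h1]] := @d_lt R alpha b g (d_alpha b g + e / 2) ltac:(lra).
have [s2 [c2 h2]] := @d_lt R alpha g h (d_alpha g h + e / 2) ltac:(lra).
have := d_le (comp_corr c1 c2); have := comp_dist c1 c2; lra.
Qed.

End Compose.

Section Exhaust.
Variable R : realType.
Variable alpha : R.
Local Notation T := (Ialpha alpha).

Lemma maxlist (P : R * R -> Prop) (N : nat) :
  (forall l : seq (R * R), uniq l -> (forall U, U \in l -> P U) -> (size l <= N)%N) ->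
  exists l, uniq l /\ forall U, U \in l <-> P U.
Proof.
move=> hN.
suff: forall n l, uniq l -> (forall U, U \in l -> P U) -> (N - size l <= n)%N ->
    exists l', uniq l' /\ forall U, U \in l' <-> P U.
  by move=> /(_ N [::]); apply => //; rewrite subn0.
elim=> [|n IH] l ul hl hn.
  exists l; split => // U; split; first exact: hl.
  move=> PU; apply/negPn/negP => hU.
  have h2 : (size (U :: l) <= N)%N.
    apply: hN; first by rewrite /= hU ul.
    by move=> V; rewrite inE => /orP [/eqP -> //|]; exact: hl.
  move: h2 hn => /=; lia.
case: (pselect (exists U, P U /\ U \notin l)) => [[U [PU hU]]|hno].
  have h2 : (size (U :: l) <= N)%N.
    apply: hN; first by rewrite /= hU ul.
    by move=> V; rewrite inE => /orP [/eqP -> //|]; exact: hl.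
  apply: (IH (U :: l)); first by rewrite /= hU ul.
    by move=> V; rewrite inE => /orP [/eqP -> //|]; exact: hl.
  by move: h2 hn => /=; lia.
exists l; split => // U; split; first exact: hl.
move=> PU; apply/negPn/negP => hU; apply: hno; by exists U.
Qed.

Lemma count_lb (c : R) (l : seq (R * R)) : (forall U, U \in l -> c < Leb U) ->
  c * (size l)%:R <= \sum_(U <- l) Leb U.
Proof.
elim: l => [|U l IH] h; first by rewrite big_nil mulr0.
rewrite big_cons /= -addn1 natrD mulrDr mulr1.
have h1 := h U (mem_head _ _).
have h2 : c * (size l)%:R <= \sum_(U <- l) Leb U.
  by apply: IH => V hV; apply: h; rewrite inE hV orbT.
lra.
Qed.

Lemma big_enum (b : T) (k : nat) : exists l, uniq l /\
  forall U, U \in l <-> (blocks b U /\ 1 / k.+1%:R < Leb U).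
Proof.
have hL : 0 <= IPlen b by rewrite /IPlen; case: (svalP b) => -[].
have kp : 0 < k.+1%:R :> R by rewrite ltr0n.
apply: (@maxlist _ (Num.Def.archi_bound (IPlen b * k.+1%:R))) => l ul hl.
have h1 := @count_lb (1 / k.+1%:R) l (fun U hU => proj2 (hl U hU)).
have h2 := @sum_le_len R alpha b l ul (fun U hU => proj1 (hl U hU)).
have h3 := archi_boundP (mulr_ge0 hL (ltW kp)).
have h4 : (size l)%:R <= IPlen b * k.+1%:R :> R.
  have : 1 / k.+1%:R * (size l)%:R <= IPlen b := le_trans h1 h2.
  by rewrite mul1r ler_pdivrMl // mulrC.
by rewrite -(ler_nat R); apply: le_trans h4 (ltW h3).
Qed.

Lemma bs_disj (b : T) U V (x : R) : blocks b U -> blocks b V -> U <> V ->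
  block_set U x -> block_set V x -> False.
Proof.
move=> bU bV UV; rewrite /block_set /= !in_itv /= => /andP [a1 a2] /andP [a3 a4].
by case: (blk_disj bU bV UV) => h; clear UV; lra.
Qed.

Definition Eset (l : seq (R * R)) : set R := \big[setU/set0]_(U <- l) block_set U.

Lemma Eset_mem l x : Eset l x <-> exists U, U \in l /\ block_set U x.
Proof.
elim: l => [|U l IH]; first by rewrite /Eset big_nil; split => // -[U []].
rewrite /Eset big_cons -/(Eset l); split.
  by case => [hx|/IH [V [hV hx]]]; [exists U; rewrite mem_head | exists V; rewrite inE hV orbT].
case=> V [hV hx]; move: hV; rewrite inE => /orP [/eqP E|hV]; first by left; rewrite -E.
by right; apply/IH; exists V.
Qed.

Lemma Eset_meas l : measurable (Eset l).
Proof.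
elim: l => [|U l IH]; first by rewrite /Eset big_nil; exact: measurable0.
rewrite /Eset big_cons; apply: measurableU => //; exact: measurable_itv.
Qed.

Lemma Eset_measure (b : T) l : uniq l -> (forall U, U \in l -> blocks b U) ->
  (@lebesgue_measure R) (Eset l) = (\sum_(U <- l) Leb U)%:E.
Proof.
elim: l => [|U l IH]; first by rewrite /Eset !big_nil measure0.
move=> /= /andP [hU ul] hl.
have bU : blocks b U by apply: hl; rewrite mem_head.
have [U0 [U1 U2]] := blk bU.
rewrite /Eset big_cons -/(Eset l) measureU //; first last.
- apply/seteqP; split => x // [hx /Eset_mem [V [hV hVx]]].
  have bV : blocks b V by apply: hl; rewrite inE hV orbT.
  have UV : U <> V by move=> E; move: hU; rewrite E hV.
  exact: (bs_disj bU bV UV hx hVx).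
- exact: Eset_meas.
- exact: measurable_itv.
rewrite big_cons EFinD; congr (_ + _)%E.
  have h := lebesgue_measure_itv `]U.1, U.2[; rewrite /= lte_fin U1 -EFinB in h.
  exact: h.
by apply: IH => // V hV; apply: hl; rewrite inE hV orbT.
Qed.

Lemma exhaust (b : T) (e : R) : 0 < e -> exists l, uniq l /\
  (forall U, U \in l -> blocks b U) /\ IPlen b - \sum_(U <- l) Leb U < e.
Proof.
move=> he; apply: contrapT => hcon.
have H : forall l, uniq l -> (forall U, U \in l -> blocks b U) ->
    \sum_(U <- l) Leb U <= IPlen b - e.
  move=> l ul hl; rewrite leNgt; apply/negP => h; apply: hcon; exists l; split => //.
  split => //; lra.
pose Lk k := proj1_sig (cid (big_enum b k)).
have hLk k : uniq (Lk k) /\ forall U, U \in Lk k <-> (blocks b U /\ 1 / k.+1%:R < Leb U).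
  exact: (proj2_sig (cid (big_enum b k))).
pose F k := Eset (Lk k).
have mF : forall k, measurable (F k) by move=> k; exact: Eset_meas.
have ndF : {homo F : n m / (n <= m)%N >-> (n <= m)%O}.
  move=> n m nm; rewrite subsetEset => x /Eset_mem [U [hU hx]].
  apply/Eset_mem; exists U; split => //.
  have [_ hm] := hLk m; have [_ hn] := hLk n.
  have [bU lU] := (hn U).1 hU; apply/(hm U); split => //.
  apply: le_lt_trans lU; rewrite ler_pdivrMr ?ltr0n // mulrC mulrA mulr1.
  by rewrite ler_pdivlMr ?ltr0n // mul1r ler_nat.
have mcup : measurable (\bigcup_k F k) := bigcupT_measurable F mF.
have cv := @nondecreasing_cvg_mu _ _ R (@lebesgue_measure R) F mF mcup ndF.
have hlim : ((@lebesgue_measure R) (\bigcup_k F k) <= (IPlen b - e)%:E)%E.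
  rewrite -(cvg_lim _ cv) //; apply: lime_le; first by apply/cvg_ex; eexists; exact: cv.
  apply: nearW => k /=; rewrite /F.
  have [uk hk] := hLk k.
  rewrite (Eset_measure (b := b) uk); last by move=> U /(hk U) [].

  by rewrite lee_fin; apply: H => // U /(hk U) [].
have [_ [_ [_ hneg]]] : is_interval_partition (blocks b) (IPlen b) := (proj2_sig b).1.
have hL : 0 <= IPlen b by rewrite /IPlen; case: (svalP b) => -[].
case: hneg => N [mN N0 sub].
have cov : `[0, IPlen b] `<=` (\bigcup_k F k) `|` N.
  move=> x hx; case: (pselect ((\bigcup_(U in blocks b) block_set U) x)) => hU.
    case: hU => U bU hUx; left.
    have [U0 [U1 U2]] := blk bU.
    have lp : 0 < Leb U by rewrite /Leb; lra.
    have [k hk] : exists k : nat, 1 / k.+1%:R < Leb U.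
      exists (Num.Def.archi_bound (1 / Leb U)).
      have h3 := archi_boundP (ltW (divr_gt0 ltr01 lp)).
      rewrite ltr_pdivrMr ?ltr0n // mulrC -ltr_pdivrMr //.
      by apply: lt_le_trans h3 _; rewrite ler_nat.
    exists k => //; apply/Eset_mem; exists U; split => //.
    by have [_ /(_ U) ->] := hLk k.
  by right; apply: sub; split.
have m0 : measurable (`[0, IPlen b] : set R) by exact: measurable_itv.
have h1 : ((@lebesgue_measure R) (`[0%R, IPlen b]%classic : set R) <= (@lebesgue_measure R) ((\bigcup_k F k) `|` N))%E :=
  le_measure (@lebesgue_measure R) (mem_set m0) (mem_set (measurableU _ _ mcup mN)) cov.
have h2 : ((@lebesgue_measure R) (\bigcup_k F k `|` N) <=
   (@lebesgue_measure R) (\bigcup_k F k) + (@lebesgue_measure R) N)%E :=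
  measureU2 (@lebesgue_measure R) mcup mN.
rewrite N0 adde0 in h2.
have := le_trans h1 (le_trans h2 hlim).
rewrite lebesgue_measure_itv /= lte_fin.
case: ltP => hL0; rewrite ?sube0 ?lee_fin; lra.
Qed.

Lemma exhaust_sorted (b : T) (e : R) : 0 < e -> exists l,
  pairwise (@block_lt R) l /\ (forall U, U \in l -> blocks b U) /\
  IPlen b - \sum_(U <- l) Leb U < e.
Proof.
move=> he; have [l [ul [hl hs]]] := exhaust b he.
exists (sort (@le1 R) l); split; first exact: sort_blocks ul hl.
split; first by move=> U; rewrite mem_sort; exact: hl.
have pe : perm_eq (sort (@le1 R) l) l by rewrite perm_sort.
by rewrite (perm_big _ pe).
Qed.

End Exhaust.

Section Classes.
Variable R : realType.
Variable alpha : R.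
Local Notation T := (Ialpha alpha).
Implicit Types (b g : T).

Lemma floor_close (x y : R) : Num.floor x = Num.floor y -> `|x - y| < 1.
Proof.
move=> E; have := floor_itv x; have := floor_itv y; rewrite E !intrD.
move=> /andP [a1 a2] /andP [a3 a4]; rewrite ltr_norml; apply/andP; split; lra.
Qed.

Lemma floor_close_sc (x y c : R) : 0 < c -> Num.floor (x * c) = Num.floor (y * c) ->
  `|x - y| < 1 / c.
Proof.
move=> hc /floor_close; rewrite -mulrBl normrM (gtr0_norm hc).
by rewrite ltr_pdivlMr // mul1r.
Qed.

Lemma mem_zip2 (A B : eqType) (s : seq A) (t : seq B) x y :
  (x, y) \in zip s t -> x \in s /\ y \in t.
Proof.
elim: s t => [|a s IH] [|c t] //=; rewrite inE => /orP [/eqP [-> ->]|h].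
  by rewrite eqxx mem_head.
by have [h1 h2] := IH t h; rewrite !inE h1 h2 !orbT.
Qed.

Lemma zip_map_eq (A B : eqType) (C : Type) (f : A -> C) (g : B -> C) xs ys :
  map f xs = map g ys -> forall p, p \in zip xs ys -> f p.1 = g p.2.
Proof.
elim: xs ys => [|x xs IH] [|y ys] //= [e1 e2] p; rewrite inE => /orP [/eqP -> //|].
exact: IH.
Qed.

Lemma sum_le_const (F : (R * R) * (R * R) -> R) (c : R) s :
  (forall p, p \in s -> F p <= c) -> \sum_(p <- s) F p <= c * (size s)%:R.
Proof.
elim: s => [|p s IH] h; first by rewrite big_nil mulr0.
rewrite big_cons /= -addn1 natrD mulrDr mulr1.
have h1 := h p (mem_head _ _).
have h2 : \sum_(p <- s) F p <= c * (size s)%:R.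
  by apply: IH => q hq; apply: h; rewrite inE hq orbT.
lra.
Qed.

Definition epsm (m : nat) : R := 1 / m.+1%:R.

Lemma epsm_gt0 m : 0 < epsm m.
Proof. by rewrite /epsm divr_gt0 // ltr0n. Qed.

Definition lst b m : seq (R * R) := proj1_sig (cid (exhaust_sorted b (epsm_gt0 m))).

Lemma lstP b m : pairwise (@block_lt R) (lst b m) /\
  (forall U, U \in lst b m -> blocks b U) /\
  IPlen b - \sum_(U <- lst b m) Leb U < epsm m.
Proof. exact: (proj2_sig (cid (exhaust_sorted b (epsm_gt0 m)))). Qed.

Definition sgf b m (U : R * R) : int * int :=
  (Num.floor (Leb U * ((size (lst b m))%:R * m.+1%:R)),
   Num.floor (DivU b U * m.+1%:R)).

Definition sig b m : seq (int * int) * int :=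
  (map (sgf b m) (lst b m), Num.floor (Divinf b * m.+1%:R)).

Lemma class_close b g m : sig b m = sig g m -> d_alpha b g <= 2 * epsm m.
Proof.
case=> e1 e2.
have [pb [hb ub]] := lstP b m; have [pg [hg ug]] := lstP g m.
set lb := lst b m in e1 pb hb ub; set lg := lst g m in e1 pg hg ug.
have hsz : size lb = size lg by rewrite -(size_map (sgf b m)) e1 size_map.
set s := zip lb lg.
have f1 : map fst s = lb by rewrite /s; apply: unzip1_zip; rewrite hsz.
have f2 : map snd s = lg by rewrite /s; apply: unzip2_zip; rewrite hsz.
have cs : is_correspondence b g s.
  split; last by rewrite f1 f2; split; apply: pairwise_sorted.
  move=> [U V] /mem_zip2 [hU hV]; split; [exact: hb | exact: hg].
apply: le_trans (d_le cs) _.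
have mp : (0 : R) < m.+1%:R by rewrite ltr0n.
have hfe := zip_map_eq e1.
have hS : SS s <= epsm m.
  case: (posnP (size lb)) => hn.
    have e0 : s = [::].
      rewrite /s; move/size0nil: hn => hn.
      by rewrite hn; case: (lg).
    by rewrite /SS e0 big_nil; apply: ltW; apply: epsm_gt0.
  have np : (0 : R) < (size lb)%:R by rewrite ltr0n.
  apply: le_trans (sum_le_const (c := 1 / ((size lb)%:R * m.+1%:R)) _) _.
    move=> p hp; apply: ltW; have := hfe p hp; rewrite /sgf -/lb -/lg -hsz.
    by case=> h _; apply: floor_close_sc => //; apply: mulr_gt0.
  rewrite /s size_zip -hsz minnn /epsm !div1r invfM mulrAC mulVf ?mul1r //.
  by rewrite (gt_eqF np).
have hSA : SA s = \sum_(U <- lb) Leb U by rewrite SA_map f1.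
have hSB : SB s = \sum_(U <- lg) Leb U by rewrite SB_map f2.
apply/dist_le; split.
- rewrite hSA; have := epsm_gt0 m; lra.
- rewrite hSB; have := epsm_gt0 m; lra.
- rewrite /MX big_seq; apply: bigmax_le => [|p hp].
    by apply: mulr_ge0 => //; apply: ltW; apply: epsm_gt0.
  apply: ltW; apply: lt_le_trans (_ : epsm m <= _); last first.
    by have := epsm_gt0 m; lra.
  have := hfe p hp; rewrite /sgf -/lb -/lg; case=> _ h.
  by rewrite /epsm; apply: floor_close_sc.
- apply: ltW; apply: lt_le_trans (_ : epsm m <= _); last first.
    by have := epsm_gt0 m; lra.
  by rewrite /epsm; apply: floor_close_sc.
Qed.

End Classes.

Section Cube.
Variable R : realType.

Definition inCube (f : nat -> R) : Prop := forall n, 0 <= f n <= 1.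
Definition Kc := {f : nat -> R | inCube f}.

Definition wgt (n : nat) : R := 1 / n.+1%:R.

Lemma wgt_gt0 n : 0 < wgt n.
Proof. by rewrite /wgt divr_gt0 // ltr0n. Qed.

Lemma wgt_le1 n : wgt n <= 1.
Proof. by rewrite /wgt ler_pdivrMr ?ltr0n // mul1r ler1n. Qed.

Definition term (a b : nat -> R) (n : nat) : R := Num.min `|a n - b n| (wgt n).

Definition rhoS (a b : nat -> R) : set R := [set r | exists n, r = term a b n].

Lemma term_ge0 a b n : 0 <= term a b n.
Proof. by rewrite /term le_min normr_ge0 ltW ?wgt_gt0. Qed.

Lemma term_le_wgt a b n : term a b n <= wgt n.
Proof. by rewrite /term ge_min lexx orbT. Qed.

Lemma term_le_abs a b n : term a b n <= `|a n - b n|.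
Proof. by rewrite /term ge_min lexx. Qed.

Lemma rhoS_sup a b : has_sup (rhoS a b).
Proof.
split; first by exists (term a b 0); exists 0%N.
exists 1 => r [n ->]; apply: le_trans (term_le_wgt a b n) (wgt_le1 n).
Qed.

Definition rho0 (a b : nat -> R) : R := sup (rhoS a b).
Definition rho (a b : Kc) : R := rho0 (sval a) (sval b).

Lemma term_le_rho a b n : term a b n <= rho0 a b.
Proof. by apply: sup_upper_bound; [exact: rhoS_sup | exists n]. Qed.

Lemma rho_le a b c : (forall n, term a b n <= c) -> rho0 a b <= c.
Proof.
move=> h; apply: ge_sup; first by exists (term a b 0); exists 0%N.
by move=> r [n ->].
Qed.

Lemma rho_ge0 a b : 0 <= rho0 a b.
Proof. exact: le_trans (term_ge0 a b 0) (term_le_rho a b 0). Qed.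

Lemma term_sym a b n : term a b n = term b a n.
Proof. by rewrite /term distrC. Qed.

Lemma min_facts (x w : R) : [/\ Num.min x w <= x, Num.min x w <= w,
  x <= w -> x <= Num.min x w & w <= x -> w <= Num.min x w].
Proof.
split; first by rewrite ge_min lexx.
- by rewrite ge_min lexx orbT.
- by move=> h; rewrite le_min lexx h.
- by move=> h; rewrite le_min lexx h.
Qed.

Lemma term_tri a b c n : term a c n <= term a b n + term b c n.
Proof.
rewrite /term.
have h := ler_distD (b n) (a n) (c n).
have [c1 c2 _ _] := min_facts `|a n - c n| (wgt n).
have [a1 a2 a3 a4] := min_facts `|a n - b n| (wgt n).
have [b1 b2 b3 b4] := min_facts `|b n - c n| (wgt n).
have w := wgt_gt0 n.
have p1 := normr_ge0 (a n - b n); have p2 := normr_ge0 (b n - c n).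
case: (leP `|a n - b n| (wgt n)) => h1; case: (leP `|b n - c n| (wgt n)) => h2.
- have := a3 h1; have := b3 h2; lra.
- have := a3 h1; have := b4 (ltW h2); lra.
- have := a4 (ltW h1); have := b3 h2; lra.
- have := a4 (ltW h1); have := b4 (ltW h2); lra.
Qed.

Lemma rho_metric : is_metric rho.
Proof.
split; first by move=> x y; apply: rho_ge0.
split.
  move=> [a ha] [b hb]; rewrite /rho /=; split => [h|E]; last first.
    case: E => E; subst b; apply/le_anti/andP; split; last exact: rho_ge0.
    by apply: rho_le => n; rewrite /term subrr normr0 ge_min lexx.
  have E : a = b.
    apply/funext => n; have := term_le_rho a b n; rewrite h /term ge_min.
    case/orP => [|hw]; last by have := wgt_gt0 n; lra.
    by rewrite normr_le0 subr_eq0 => /eqP.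
  by subst b; congr exist; apply: Prop_irrelevance.
split.
  move=> x y; rewrite /rho /rho0; congr sup; apply/seteqP; split => r [n ->];
  by exists n; rewrite term_sym.
move=> x y z; rewrite /rho; apply: rho_le => n.
apply: le_trans (term_tri _ (sval y) _ n) _.
by apply: lerD; apply: term_le_rho.
Qed.

End Cube.

Definition RTt (R : realType) : topologicalType := R^o.
Definition PP (R : realType) := {ptws nat -> RTt R}.
HB.instance Definition _ (R : realType) := Topological.copy (PP R) {ptws nat -> RTt R}.
HB.instance Definition _ (R : realType) := isPointed.Build (PP R) (fun _ => (0 : R)).

Section CubeCompact.
Variable R : realType.
Local Notation RT := (RTt R).
Local Notation P := (PP R).

Lemma wgt_anti (n N : nat) : (N <= n)%N -> wgt R n <= wgt R N.
Proof.
move=> h; rewrite /wgt !div1r lef_pV2 ?posrE ?ltr0n // ler_nat; lia.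
Qed.

Lemma wgt_small (e : R) : 0 < e -> exists N, wgt R N <= e.
Proof.
move=> he; exists (Num.Def.archi_bound (1 / e)).
have h3 := archi_boundP (ltW (divr_gt0 ltr01 he)).
rewrite /wgt ler_pdivrMr ?ltr0n // mulrC -ler_pdivrMr //.
by apply: ltW; apply: lt_le_trans h3 _; rewrite ler_nat.
Qed.

Lemma rho_cyl (a b : nat -> R) (N : nat) (e : R) :
  (forall n, (n < N)%N -> `|a n - b n| < e) -> wgt R N <= e -> rho0 a b <= e.
Proof.
move=> h hw; apply: rho_le => n.
case: (ltnP n N) => hn.
  by apply: le_trans (term_le_abs _ _ _) _; apply: ltW; apply: h.
by apply: le_trans (term_le_wgt _ _ _) _; apply: le_trans (wgt_anti hn) hw.
Qed.

Definition cyl (x : nat -> R) (N : nat) (e : R) : set P :=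
  [set f | forall n, (n < N)%N -> `|(f n : R) - x n| < e].

Lemma cyl_open x N e : open (cyl x N e).
Proof.
elim: N => [|N IH].
  have -> : cyl x 0 e = setT by apply/seteqP; split => // f _ n.
  exact: openT.
have -> : cyl x N.+1 e = cyl x N e `&` (proj N @^-1` (ball (x N : R^o) e : set RT)).
  apply/seteqP; split => f.
    move=> h; split; first by move=> n hn; apply: h; lia.
    by rewrite /= /ball /= distrC; apply: h.
  move=> [h1 h2] n hn; case: (ltngtP n N) => hnN.
  - exact: h1.
  - lia.
  - by subst n; move: h2; rewrite /= /ball /= distrC.
apply: openI => //; apply: open_comp; last exact: (@ball_open R R^o (x N) e).
move=> f _; exact: proj_continuous.
Qed.

Lemma Kc_compact : d_compact (@rho R).
Proof.
move=> I F Fo Fc.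
have hc0 : @compact P [set f | forall n, `[0, 1]%classic (f n)].
  exact: (@tychonoff nat (fun _ => RT) (fun _ => `[0,1]%classic) (fun _ => @segment_compact R 0 1)).
have hc : @cover_compact P [set f | forall n, `[0, 1]%classic (f n)] by rewrite -compact_cover.
pose Ti (i : I) (t : Kc R * (nat * R)) : Prop := F i t.1 /\ 0 < t.2.2 /\
  forall y : Kc R, (forall n, (n < t.2.1)%N -> `|sval y n - sval t.1 n| < t.2.2) -> F i y.
pose G (i : {classic I}) : set P := \bigcup_(t in Ti i) cyl (sval t.1) t.2.1 t.2.2.
have Gopen : forall i, setT i -> open (G i).
  by move=> i _; apply: bigcup_open => t _; apply: cyl_open.
have Gcov : [set f : P | forall n, `[0, 1]%classic (f n)] `<=` cover setT G.
  move=> f hf.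
  have hf' : inCube f by move=> n; have := hf n; rewrite /= in_itv.
  pose x : Kc R := exist _ f hf'.
  have [i hi] := Fc x.
  have [e [he hb]] := Fo i x hi.
  have [N hN] := wgt_small (e := e / 2) ltac:(lra).
  exists i => //; exists (x, (N, e / 2)).
    split => //; split; first by rewrite /=; lra.
    move=> y hy; apply: hb; rewrite /rho.
    apply: le_lt_trans (_ : e / 2 < e); last lra.
    apply: rho_cyl hN => n hn; rewrite distrC; exact: hy.
  move=> n hn /=; rewrite subrr normr0; lra.
have [D' _ hD'] := hc {classic I} setT G Gopen Gcov.
pose s := finmap.enum_fset D'.
have [x0 _] : exists x : Kc R, True.
  have h0 : inCube (fun _ : nat => (0 : R)) by move=> n; rewrite lexx ler01.
  by exists (exist _ _ h0).
have [i0 _] := Fc x0.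
exists (size s), (fun k => nth i0 s k) => y.
have hy : [set f : P | forall n, `[0, 1]%classic (f n)] (sval y).
  by move=> n; rewrite /= in_itv /=; apply: (proj2_sig y n).
have [i hi [t ht hyt]] := hD' _ hy.
have his : i \in s by exact: hi.
have hk : (index i s < size s)%N by rewrite index_mem.
exists (Ordinal hk) => /=.
change (F (nth (i0 : {classic I}) s (index i s)) y); rewrite nth_index //.
case: ht => _ [_ H]; apply: H => n hn; exact: hyt.
Qed.

End CubeCompact.

Section Main.
Variable R : realType.
Variable alpha : R.
Local Notation T := (Ialpha alpha).
Implicit Types (x y z : T).

Local Notation d := (@d_alpha R alpha).

Definition CodeT := (nat * (seq (int * int) * int))%type.

Definition rep (c : CodeT) : option T :=
  match pselect (exists x : T, sig x c.1 = c.2) with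
  | left h => Some (proj1_sig (cid h))
  | right _ => None
  end.

Definition pt (n : nat) : option T := obind rep (unpickle n).

Definition phi x (n : nat) : R :=
  match pt n with Some z => Num.min (d x z) 1 | None => 0 end.

Lemma dense x m : exists n z, pt n = Some z /\ d x z <= 2 * epsm R m.
Proof.
exists (pickle ((m, sig x m) : CodeT)).
rewrite /pt pickleK /= /rep /=.
case: pselect => [h|h]; last by exfalso; apply: h; exists x.
exists (proj1_sig (cid h)); split => //.
rewrite d_sym; apply: class_close; exact: (proj2_sig (cid h)).
Qed.

Lemma phi_cube x : inCube (phi x).
Proof.
move=> n; rewrite /phi; case: (pt n) => [z|]; last by rewrite lexx ler01.
have [a1 a2 a3 a4] := min_facts (d x z) 1.
have := d_ge0 x z.
by case: (leP (d x z) 1) => h; [have := a3 h | have := a4 (ltW h)]; move=> ? ?; apply/andP; split; lra.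
Qed.

Definition fK x : Kc R := exist _ (phi x) (phi_cube x).

Definition dP x y : R := rho (fK x) (fK y).

Lemma min1_lip (a b : R) : `|Num.min a 1 - Num.min b 1| <= `|a - b|.
Proof.
have [a1 a2 a3 a4] := min_facts a 1; have [b1 b2 b3 b4] := min_facts b 1.
have n1 := ler_norm (a - b).
have n2 : b - a <= `|a - b| by rewrite distrC ler_norm.
rewrite ler_norml; apply/andP; split;
case: (leP a 1) => h1; case: (leP b 1) => h2;
  try (have := a3 h1); try (have := a4 (ltW h1)); try (have := b3 h2); try (have := b4 (ltW h2));
  lra.
Qed.

Lemma phi_lip x y n : `|phi x n - phi y n| <= d x y.
Proof.
rewrite /phi; case: (pt n) => [z|]; last by rewrite subrr normr0 d_ge0.
apply: le_trans (min1_lip _ _) _.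
have t1 := d_triangle x y z; have t2 := d_triangle y x z.
rewrite (d_sym y x) in t2.
rewrite ler_norml; apply/andP; split; lra.
Qed.

Lemma dP_le x y : dP x y <= d x y.
Proof.
rewrite /dP /rho /=; apply: rho_le => n.
apply: le_trans (term_le_abs _ _ _) _; exact: phi_lip.
Qed.

Lemma epsm_wgt m : epsm R m = wgt R m.
Proof. by []. Qed.

Lemma near_pt x (e : R) : 0 < e -> e <= 1 -> exists n z,
  pt n = Some z /\ d x z <= e / 4 /\ phi x n = d x z.
Proof.
move=> he he1.
have [m hm] := wgt_small (R := R) (e := e / 8) ltac:(lra).
have [n [z [hp hz]]] := dense x m.
exists n, z; split => //.
have hz' : d x z <= e / 4 by move: hz; rewrite epsm_wgt; lra.
split => //; rewrite /phi hp.
have [a1 a2 a3 a4] := min_facts (d x z) 1.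
apply/le_anti/andP; split => //; apply: a3; lra.
Qed.

Lemma dP_small x y (e : R) : 0 < e -> e <= 1 -> forall n z,
  pt n = Some z -> d x z <= e / 4 -> phi x n = d x z ->
  `|phi x n - phi y n| < e / 4 -> d x y < e.
Proof.
move=> he he1 n z hp hz hx.
rewrite hx ltr_norml => /andP [h1 h2].
move: h1 h2; rewrite /phi hp => h1 h2.
have [b1 b2 b3 b4] := min_facts (d y z) 1.
have hyz : d y z < e / 2.
  case: (leP (d y z) 1) => h; last by have := b4 (ltW h); lra.
  by have := b3 h; lra.
have := d_triangle x z y; rewrite (d_sym z y); lra.
Qed.

Lemma dP_metric : is_metric dP.
Proof.
have [r1 [r2 [r3 r4]]] := rho_metric R.
split; first by move=> x y; apply: r1.
split.
  move=> x y; split; last by move=> ->; apply/(r2 (fK y) (fK y)).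
  move=> /r2 E.
  have Ephi : phi x = phi y by move: (congr1 sval E).
  apply: d_def => eps heps.
  suff : d x y < eps by apply: d_lt.
  pose e := Num.min eps 1.
  have [c1 c2 c3 c4] := min_facts eps 1.
  have he : 0 < e by rewrite /e lt_min heps ltr01.
  have [n [z [hp [hz hx]]]] := near_pt x he c2.
  have : d x y < e.
    apply: (dP_small he c2 hp hz hx).
    by rewrite Ephi subrr normr0; lra.
  by move=> h; apply: lt_le_trans h c1.
split; first by move=> x y; apply: r3.
by move=> x y z; apply: r4.
Qed.

Lemma dP_open (U : set T) : d_open d U <-> d_open dP U.
Proof.
split.
  move=> hU x Ux; have [e [he hb]] := hU x Ux.
  pose e1 := Num.min e 1.
  have [c1 c2 c3 c4] := min_facts e 1.
  have he1 : 0 < e1 by rewrite /e1 lt_min he ltr01.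
  have [n [z [hp [hz hx]]]] := near_pt x he1 c2.
  exists (Num.min (e1 / 4) (wgt R n)); split.
    by rewrite lt_min; apply/andP; split; [lra | apply: wgt_gt0].
  move=> y hy; apply: hb; apply: lt_le_trans c1.
  apply: (dP_small he1 c2 hp hz hx).
  have ht : term (phi x) (phi y) n <= dP x y by apply: term_le_rho.
  have [m1 m2 m3 m4] := min_facts (e1 / 4) (wgt R n).
  have [t1 t2 t3 t4] := min_facts `|phi x n - phi y n| (wgt R n).
  rewrite /term in ht.
  case: (leP `|phi x n - phi y n| (wgt R n)) => hh.
    by have := t3 hh; lra.
  by have := t4 (ltW hh); lra.
move=> hU x Ux; have [e [he hb]] := hU x Ux.
exists e; split => // y hy; apply: hb.
by apply: le_lt_trans (dP_le x y) hy.
Qed.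

End Main.

Unset Implicit Arguments.

Theorem corollary3p7 (R : realType) (alpha : R) (halpha : 0 < alpha < 1) :
  exists d' : Ialpha alpha -> Ialpha alpha -> R,
    is_metric d' /\
    (forall U : set (Ialpha alpha), d_open d_alpha U <-> d_open d' U) /\
    exists (K : Type) (rho : K -> K -> R) (f : Ialpha alpha -> K),
      is_metric rho /\ d_compact rho /\
      forall x y, rho (f x) (f y) = d' x y.
Proof.
exists (@dP R alpha); split; first exact: dP_metric.
split; first exact: dP_open.
exists (Kc R), (@rho R), (@fK R alpha); split; first exact: rho_metric.
by split; [exact: Kc_compact | by []].
Qed.
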